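(* Let $q$ be a power of a prime $p$, and let $G<GL(V)$ with $V=\mathbb{F}_q^{mn}$ be a (not necessarily irreducible) $p$-exceptional group which acts primitively as a permutation group on the $n$ summands of a decomposition $V=V_1\oplus\cdots\oplus V_n$, where $\dim_{\mathbb{F}_q}V_i=m\ge1$ and $n\ge2$. Let $H\le S_n$ be the permutation group induced on $\{V_1,\dots,V_n\}$. Then either $H$ has order coprime to $p$, or $H$ is $p$-concealed (equivalently, as $H$ is primitive, one of: $A_n\trianglelefteq H$ with $n=ap^s-1$, $s\ge1$, $1\le a\le p-1$, $(a,s)\ne(1,1)$ and $H\ne A_3$ if $(n,p)=(3,2)$; $(n,p)=(8,3)$ and $H\in\{AGL_3(2),A\Gamma L_1(8)\}$; $(n,p)=(5,2)$ and $H=D_{10}$) and the setwise stabiliser $G_{V_1}$ is transitive on $V_1\setminus\{0\}$.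
   Context: $G\le GL(V)$ is $p$-exceptional if $p$ divides $|G|$ and every orbit of $G$ on $V$ has size coprime to $p$. $H\le S_n$ is $p$-concealed if $p$ divides $|H|$ and every orbit of $H$ on the power set of $\{1,\dots,n\}$ has size coprime to $p$. *)

(* Defs.v *)
From HB Require Import structures.
From mathcomp Require Import all_boot all_order all_algebra all_fingroup all_solvable.
Set Implicit Arguments. Unset Strict Implicit. Unset Printing Implicit Defensive.
Import GRing.Theory.

Local Open Scope group_scope.

Definition GLorbit (F : finFieldType) (d : nat) (G : {set {'GL_d[F]}})
    (v : 'rV[F]_d.-1.+1) : {set 'rV[F]_d.-1.+1} :=
  [set (v *m GLval g)%R | g in G].

Definition p_exceptional (p : nat) (F : finFieldType) (d : nat)
    (G : {set {'GL_d[F]}}) : Prop :=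
  (p %| #|G|)%N /\ forall v : 'rV[F]_d.-1.+1, coprime p #|GLorbit G v|.

Definition p_concealed (p n : nat) (H : {set {perm 'I_n}}) : Prop :=
  (p %| #|H|)%N /\ forall A : {set 'I_n}, coprime p #|orbit 'P^* H A|.

Definition induced_perms (F : finFieldType) (d n : nat) (G : {set {'GL_d[F]}})
    (Vs : 'I_n -> 'M[F]_d.-1.+1) : {set {perm 'I_n}} :=
  [set s : {perm 'I_n} |
     [exists g in G, [forall i, ((Vs i *m GLval g)%R == Vs (s i))%MS]]].

(* Main.v *)
Require Import Defs.
From HB Require Import structures.
From mathcomp Require Import all_boot all_order all_algebra all_fingroup all_solvable.
Set Implicit Arguments. Unset Strict Implicit. Unset Printing Implicit Defensive.
Import GRing.Theory.
Local Open Scope group_scope.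

Section Setup.
Variables (F : finFieldType) (m n : nat).
Local Notation d := ((m * n).-1.+1).
Variables (G : {group {'GL_(m * n)[F]}}) (Vs : 'I_n -> 'M[F]_d).
Hypothesis m1 : (1 <= m)%N.
Hypothesis rk : forall i, \rank (Vs i) = m.
Hypothesis dx : mxdirect (\sum_i Vs i)%MS.
Hypothesis permV : forall g i, g \in G -> exists j, ((Vs i *m GLval g)%R == Vs j)%MS.

Definition sumx (j : 'I_n) := (\sum_(k | k != j) Vs k)%MS.

Lemma Vs_neq0 i : (Vs i != 0)%R.
Proof. by rewrite -mxrank_eq0 rk -lt0n. Qed.

Lemma dx_cap r j (x : 'M[F]_(r, d)) : (x <= Vs j)%MS -> (x <= sumx j)%MS -> x = 0%R.
Proof.
move=> h1 h2; have /mxdirect_sumsP H0 := dx; have H1 := H0 j isT.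
have : (x <= Vs j :&: sumx j)%MS by rewrite sub_capmx h1 h2.
by rewrite /sumx H1 submx0 => /eqP.
Qed.

Lemma Vs_inj j k : (Vs j == Vs k)%MS -> j = k.
Proof.
move=> /eqmxP e; apply/eqP; apply/negP => /negP jk.
have : Vs j = 0%R.
  apply: (@dx_cap _ j); first exact: submx_refl.
  apply: (sumsmx_sup k); [by rewrite eq_sym | by rewrite e].
by move/eqP; rewrite (negbTE (Vs_neq0 j)).
Qed.


Lemma eqmx_trans_b (r1 r2 r3 : nat) (A : 'M[F]_(r1, d)) (B : 'M[F]_(r2, d)) (C : 'M[F]_(r3, d)) :
  (A == B)%MS -> (B == C)%MS -> (A == C)%MS.
Proof. by move=> /eqmxP e1 /eqmxP e2; apply/eqmxP; apply: eqmx_trans e1 e2. Qed.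

Lemma eqmxMr_b (r1 r2 : nat) (A : 'M[F]_(r1, d)) (B : 'M[F]_(r2, d)) (C : 'M[F]_d) :
  (A == B)%MS -> ((A *m C)%R == (B *m C)%R)%MS.
Proof. by move=> /eqmxP e1; apply/eqmxP; apply: eqmxMr. Qed.

Lemma sig_exists g : g \in G ->
  exists s : {perm 'I_n}, forall i, ((Vs i *m GLval g)%R == Vs (s i))%MS.
Proof.
move=> Gg.
pose f i := odflt i [pick j | ((Vs i *m GLval g)%R == Vs j)%MS].
have fP i : ((Vs i *m GLval g)%R == Vs (f i))%MS.
  rewrite /f; case: pickP => [j -> //|] /= H.
  by have [j /eqP] := permV i Gg; rewrite H.
have finj : injective f.
  move=> a b fab; apply: Vs_inj.
  have e : ((Vs a *m GLval g)%R == (Vs b *m GLval g)%R)%MS.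
    by apply: eqmx_trans_b (fP a) _; rewrite fab; move/eqmxP: (fP b) => e; apply/eqmxP; apply: eqmx_sym.
  have := eqmxMr_b (invmx (GLval g)) e.
  by rewrite !mulmxK ?GL_unitmx.
by exists (perm finj) => i; rewrite permE.
Qed.

Definition sig (g : {'GL_(m * n)[F]}) : {perm 'I_n} :=
  odflt 1 [pick s : {perm 'I_n} | [forall i, ((Vs i *m GLval g)%R == Vs (s i))%MS]].

Lemma sigP g : g \in G -> forall i, ((Vs i *m GLval g)%R == Vs (sig g i))%MS.
Proof.
move=> Gg; rewrite /sig; case: pickP => [s /forallP //|] H.
by have [s Hs] := sig_exists Gg; have /forallP := H s; case.
Qed.

Lemma sig_eq g i j : g \in G -> ((Vs i *m GLval g)%R == Vs j)%MS -> sig g i = j.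
Proof.
move=> Gg e; apply: Vs_inj; apply: eqmx_trans_b e.
by move/eqmxP: (sigP Gg i) => e'; apply/eqmxP; apply: eqmx_sym.
Qed.

Lemma sigM : {in G &, {morph sig : x y / x * y}}.
Proof.
move=> x y Gx Gy; apply/permP => i; rewrite permM.
apply: sig_eq; first exact: groupM.
rewrite GL_ME -mulmxE mulmxA.
apply: eqmx_trans_b (eqmxMr_b _ (sigP Gx i)) _.
exact: sigP.
Qed.

Canonical sig_morphism := Morphism sigM.


Lemma inducedE : induced_perms G Vs = sig @* G.
Proof.
apply/setP => s; rewrite inE morphimEdom; apply/existsP/imsetP => [[g /andP[Gg /forallP H]] | [g Gg ->]].
  exists g => //; apply/permP => i; symmetry; exact: sig_eq (H i).
by exists g; rewrite Gg /=; apply/forallP => i; apply: sigP.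
Qed.

Lemma toI_is_action : is_action G (fun i g => sig g i).
Proof.
split => [g a b /= | i a b Ga Gb]; first exact: perm_inj.
by rewrite /= sigM // permM.
Qed.

Definition toI := Action toI_is_action.

Lemma toV1 : (fun (v : 'rV[F]_d) (g : {'GL_(m * n)[F]}) => (v *m GLval g)%R)^~ 1 =1 id.
Proof. by move=> v /=; rewrite mulmx1. Qed.

Lemma toVM : forall v, act_morph (fun (v : 'rV[F]_d) (g : {'GL_(m * n)[F]}) => (v *m GLval g)%R) v.
Proof. by move=> v a b; rewrite GL_ME -mulmxE mulmxA. Qed.

Definition toV := TotalAction toV1 toVM.

Lemma GLorbitE v : GLorbit G v = orbit toV G v.
Proof. by []. Qed.

Lemma sumx_mul g k : g \in G -> ((sumx k *m GLval g)%R <= sumx (sig g k))%MS.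
Proof.
move=> Gg; rewrite /sumx (sumsmxMr _ (fun j => Vs j)).
apply/sumsmx_subP => j jk.
apply: (sumsmx_sup (sig g j)); first by rewrite (inj_eq perm_inj).
by case/andP: (sigP Gg j).
Qed.

Lemma supp_core g k (w : 'rV[F]_d) : g \in G ->
  ((w *m GLval g)%R <= sumx (sig g k))%MS = (w <= sumx k)%MS.
Proof.
move=> Gg; apply/idP/idP => H; last first.
  by apply: submx_trans (sumx_mul k Gg); apply: submxMr.
have Gg' : g^-1 \in G by rewrite groupV.
have := submx_trans (submxMr (GLval g^-1) H) (sumx_mul (sig g k) Gg').
by rewrite -mulmxA GL_VxE mulmxV ?GL_unitmx // mulmx1 morphV // permK.
Qed.

Lemma supp_sum (A : {set 'I_n}) (f : 'I_n -> 'rV[F]_d) :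
  (forall j, j \in A -> (f j <= Vs j)%MS /\ f j != 0%R) ->
  forall k, (((\sum_(j in A) f j)%R <= sumx k)%MS = (k \notin A)).
Proof.
move=> hf k; case: (boolP (k \in A)) => kA /=; last first.
  apply: summx_sub => j jA; have [hj _] := hf j jA.
  apply: (sumsmx_sup j) => //; by apply: contraNneq kA => <-.
rewrite (bigD1 k) //=; apply/negP => H.
set rest := (\sum_(j | (j \in A) && (j != k)) f j)%R in H.
have hr : (rest <= sumx k)%MS.
  apply: summx_sub => j /andP[jA jk]; have [hj _] := hf j jA.
  exact: (sumsmx_sup j).
have [hk nz] := hf k kA.
have : f k = 0%R.
  apply: (dx_cap hk); rewrite -(addrK rest (f k)); apply: addmx_sub => //.
  by rewrite eqmx_opp.
by move/eqP; rewrite (negbTE nz).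
Qed.


Lemma stab_sub (w : 'rV[F]_d) (A : {set 'I_n}) :
  (forall k, (w <= sumx k)%MS = (k \notin A)) ->
  'C_G[w | toV] \subset 'C_G[A | toI^*].
Proof.
move=> hw; apply/subsetP => g; rewrite !inE => /andP[Gg Hg].
rewrite Gg /=; move: Hg; rewrite /= !sub1set !inE => /eqP Hg.
have sub : [set sig g x | x in A] \subset A.
  apply/subsetP => _ /imsetP[x xA ->].
  have := hw (sig g x); rewrite -Hg /= supp_core // hw xA.
  by case: (sig g x \in A).
rewrite /= /setact eqEcard sub /=.
by rewrite card_imset //; exact: perm_inj.
Qed.


Lemma orbit_coprime p : p_exceptional p G ->
  forall A, coprime p #|orbit 'P^* (sig @* G) A|.
Proof.
move=> [_ pex] A.
have -> : orbit 'P^* (sig @* G) A = orbit toI^* G A.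
  by rewrite /orbit morphimEdom -imset_comp; apply: eq_imset.
rewrite card_orbit_in ?subxx //.
set w := (\sum_(j in A) nz_row (Vs j))%R.
have hw : forall k, (w <= sumx k)%MS = (k \notin A).
  apply: supp_sum => j _; split; first exact: nz_row_sub.
  by rewrite nz_row_eq0 Vs_neq0.
apply: coprime_dvdr (indexgS G (stab_sub hw)) _.
by have := pex w; rewrite GLorbitE card_orbit.
Qed.


Lemma step1 p i : prime p -> (p %| #|sig @* G|)%N ->
  [transitive sig @* G, on [set: 'I_n] | 'P] ->
  exists (Q : {group {'GL_(m * n)[F]}}) x,
    [/\ Q \subset G, p.-group Q, x \in Q & sig x i != i].
Proof.
move=> pr pH trH.
have [P sylP] := Sylow_exists p G.
have sPG := pHall_sub sylP.
have sylH := morphim_pSylow sig_morphism sPG sylP.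
have ntH : sig @* P != 1.
  apply/negP => /eqP H1; move: sylH; rewrite H1 => /and3P[_ _].
  by rewrite indexg1 p'natE // pH.
have [y /morphimP[x Dx Px ->] x1] := trivgPn _ ntH.
have [k kx] : exists k, sig x k != k.
  apply/existsP; apply: contraR x1 => /existsPn H; apply/eqP/permP => k.
  by rewrite perm1; apply/eqP; rewrite -[_ == _]negbK H.
have := @atransP _ _ _ _ _ trH i (in_setT i); move/setP/(_ k); rewrite in_setT => /imsetP[h Hh hk].
case/morphimP: Hh => t Dt Gt ht.
exists (P :^ t^-1)%G, (x ^ t^-1); split.
- by rewrite /= conj_subG ?groupV.
- by rewrite /= pgroupJ (pHall_pgroup sylP).
- by rewrite memJ_conjg.
rewrite morphJ ?groupV //.
rewrite !permM morphV // invgK.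
apply: contra kx => /eqP e.
have := congr1 (sig t) e; rewrite permKV => e2.
by rewrite hk ht /= e2.
Qed.


Lemma trans_part p i (u v : 'rV[F]_d) : prime p -> p_exceptional p G ->
  (p %| #|sig @* G|)%N ->
  [transitive sig @* G, on [set: 'I_n] | 'P] ->
  (u <= Vs i)%MS -> (v <= Vs i)%MS -> (u != 0)%R -> (v != 0)%R ->
  exists2 g, g \in G & ((Vs i *m GLval g)%R == Vs i)%MS /\ (u *m GLval g)%R = v.
Proof.
move=> pr [_ pex] pH trH ui vi u0 v0.
case: (boolP [exists g in G, ((Vs i *m GLval g)%R == Vs i)%MS && ((u *m GLval g)%R == v)]).
  by move=> /existsP[g /and3P[Gg e1 /eqP e2]]; exists g.
move=> /negP Hno; exfalso.
have [Q [x [sQG pQ Qx xi]]] := step1 i pr pH trH.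
pose C := orbit toI Q i.
pose D := ('C_G[C | toI^*])%G.
have DN : D :=: G :&: 'N(C | toI) by rewrite /D /= astab1_set.
have sQD : Q \subset D by rewrite DN subsetI sQG; exact: acts_orbit.
have actD : [acts D, on C | toI] by rewrite DN subsetIr.
have sDG : D \subset G by rewrite DN subsetIl.
have iC : i \in C by exact: orbit_refl.
have oD : orbit toI D i = C.
  by apply/eqP; rewrite eqEsubset acts_sub_orbit // iC /=; apply: imsetS.
have pC : (p %| #|C|)%N.
  have pn : p.-nat #|C| by rewrite /C card_orbit_in // (pnat_dvd (dvdn_indexg _ _) pQ).
  have gt1 : (1 < #|C|)%N.
    apply/card_gt1P; exists i, (sig x i); split => //; first exact: (mem_orbit toI).
    by rewrite eq_sym.
  have [k Ek] := p_natP pn; rewrite Ek in gt1 *.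
  by case: k {Ek} gt1 => [|k] //; rewrite expnS dvdn_mulr.
have cD : #|C| = #|D : 'C_D[i | toI]| by rewrite -oD card_orbit_in.
have tP : forall j, j \in C -> exists2 t, t \in Q & sig t i = j.
  by move=> j /imsetP[t Qt ->]; exists t.
pose tj j := odflt 1 [pick t in Q | sig t i == j].
have tjP : forall j, j \in C -> tj j \in Q /\ sig (tj j) i = j.
  move=> j jC; rewrite /tj; case: pickP => [t /andP[Qt /eqP <-] // | H].
  by have [t Qt e] := tP j jC; have := H t; rewrite Qt e eqxx.
have QG : forall t, t \in Q -> t \in G by apply/subsetP.
pose f j := if j == i then u else (v *m GLval (tj j))%R.
have fi : f i = u by rewrite /f eqxx.
have hf : forall j, j \in C -> (f j <= Vs j)%MS /\ f j != 0%R.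
  move=> j jC; rewrite /f; case: eqP => [-> | _]; first by split.
  have [Qt et] := tjP j jC; have Gt := QG _ Qt; split.
    apply: submx_trans (submxMr _ vi) _; rewrite -{2}et.
    by case/andP: (sigP Gt i).
  apply: contra v0 => /eqP e.
  by rewrite -(mulmxK (GL_unitmx (tj j)) v) e mul0mx.
set w := (\sum_(j in C) f j)%R.
have hw := supp_sum hf.
have sWD : 'C_G[w | toV] \subset D := stab_sub hw.
have sWDi : 'C_G[w | toV] \subset 'C_D[i | toI].
  apply/subsetP => g Wg; have gD := subsetP sWD g Wg.
  move: Wg; rewrite !inE => /andP[Gg]; rewrite /= sub1set inE => /eqP Hg.
  move: gD; rewrite !inE Gg /= !sub1set !inE => SC; rewrite SC /=.
  move/eqP: SC => SC.
  apply/negPn/negP => ne.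
  set j := sig g i in ne.
  have jC : j \in C by have := mem_setact toI g iC; rewrite SC.
  have [Qt et] := tjP j jC; have Gt := QG _ Qt.
  have fj : f j = (v *m GLval (tj j))%R by rewrite /f (negbTE ne).
  have key : ((u *m GLval g)%R - f j = 0)%R.
    apply: (@dx_cap _ j).
      apply: addmx_sub; last by rewrite eqmx_opp; exact: (hf j jC).1.
      by apply: submx_trans (submxMr _ ui) _; case/andP: (sigP Gg i).
    have -> : ((u *m GLval g) - f j = (w - f j) - (w *m GLval g - u *m GLval g))%R.
      by rewrite Hg opprB [RHS]addrC addrA subrK.
    apply: addmx_sub; last rewrite eqmx_opp.
      rewrite /w (bigD1 j) //= addrAC subrr add0r.
      apply: summx_sub => l /andP[lC lj]; exact: (sumsmx_sup l) lj (hf l lC).1.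
    rewrite /w mulmx_suml (bigD1 i) //= fi addrAC subrr add0r.
    apply: summx_sub => l /andP[lC li].
    apply: (sumsmx_sup (sig g l)); first by rewrite (inj_eq perm_inj).
    apply: submx_trans (submxMr _ (hf l lC).1) _.
    by case/andP: (sigP Gg l).
  move/eqP: key; rewrite subr_eq0 => /eqP ug.
  apply: Hno; apply/existsP; exists (g * (tj j)^-1).
  rewrite groupM ?groupV // /=; apply/andP; split.
    have := sigP (groupM Gg (groupVr Gt)) i.
    rewrite sigM ?groupV // permM morphV // -/j.
    have e2 : (sig_morphism (tj j))^-1 (sig_morphism (tj j) i) = i := permK _ i.
    rewrite et in e2; rewrite e2; exact.
  by apply/eqP; rewrite -mulmxE mulmxA ug fj -mulmxA mulmxE -GL_VE -GL_ME mulgV mulmx1.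
have cop := pex w; rewrite GLorbitE card_orbit prime_coprime // in cop.
apply: (negP cop).
have sDiD : 'C_D[i | toI] \subset D by apply: subsetIl.
rewrite -(Lagrange_index sDG (subset_trans sWDi sDiD)) -(Lagrange_index sDiD sWDi).
by apply: dvdn_mull; apply: dvdn_mulr; rewrite -cD.
Qed.

End Setup.
Unset Implicit Arguments.

Theorem theorem3p1 (p : nat) (F : finFieldType) (m n : nat)
    (G : {group {'GL_(m * n)[F]}}) (Vs : 'I_n -> 'M[F]_((m * n).-1.+1)) :
  prime p -> (p \in [pchar F])%R ->
  (1 <= m)%N -> (2 <= n)%N ->
  (* V = V_1 (+) ... (+) V_n, each V_i of dimension m *)
  (forall i, \rank (Vs i) = m) ->
  mxdirect (\sum_i Vs i)%MS ->
  ((\sum_i Vs i)%MS :=: (1%:M)%R)%MS ->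
  (* G permutes the summands *)
  (forall g i, g \in G -> exists j, ((Vs i *m GLval g)%R == Vs j)%MS) ->
  p_exceptional p G ->
  (* the induced permutation group H is primitive on the n summands *)
  [primitive <<induced_perms G Vs>>, on [set: 'I_n] | 'P] ->
  coprime p #|<<induced_perms G Vs>>|
  \/ (p_concealed p <<induced_perms G Vs>> /\
      forall i : 'I_n,
        forall u v : 'rV[F]_((m * n).-1.+1),
          (u <= Vs i)%MS -> (v <= Vs i)%MS -> (u != 0)%R -> (v != 0)%R ->
          exists2 g, g \in G & ((Vs i *m GLval g)%R == Vs i)%MS /\ (u *m GLval g)%R = v).
Proof.
move=> pr pF m1 n2 rk dx sumV permV pex prim.
have HE : <<induced_perms G Vs>> = sig_morphism m1 rk dx permV @* G.
  by rewrite (inducedE m1 rk dx permV) genGid.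
rewrite HE in prim *.
case/andP: prim => trH _.
case: (boolP (coprime p #|sig_morphism m1 rk dx permV @* G|)) => [cop | ncop]; [by left | right].
have pH : (p %| #|sig_morphism m1 rk dx permV @* G|)%N by rewrite prime_coprime // negbK in ncop.
split; first split.
- exact: pH.
- exact: (orbit_coprime m1 rk dx permV pex).
move=> i u v ui vi u0 v0.
exact: (@trans_part F m n G Vs m1 rk dx permV p i u v pr pex pH trH ui vi u0 v0).
Qed.
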